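(* Let $S=\{0,1,\dots,p-1\}$ with $p\ge 2$, let $m\ge 2$, and let $f:S^m\to S$ be a local rule. If there exists no pair of replaceable local configurations and no pair of periodic local configurations for $f$, then the global map $\tau$ is injective.
   Context: A local configuration is a finite word over $S$. For a word $w=w_1w_2\cdots w_n$ with $n\ge m$, its successor under $f$ is the word $\hat f(w)=u_1\cdots u_{n-m+1}$ with $u_j=f(w_j,w_{j+1},\dots,w_{j+m-1})$. For $k\le n$, $\mathrm{left}_k(w)=w_1\cdots w_k$ and $\mathrm{right}_k(w)=w_{n-k+1}\cdots w_n$. The global map is $\tau:S^{\mathbb Z}\to S^{\mathbb Z}$, $\tau(c)(i)=f(c(i-L),\dots,c(i+R))$ for fixed integers $L,R\ge 0$ with $L+1+R=m$; the CA is (globally) injective if $\tau$ is injective. Two local configurations $\alpha,\beta$ of the same length $n$ are replaceable if: $n\ge 2m-1$; $\alpha\ne\beta$; $\mathrm{left}_{m-1}(\alpha)=\mathrm{left}_{m-1}(\beta)$; $\mathrm{right}_{m-1}(\alpha)=\mathrm{right}_{m-1}(\beta)$; and $\hat f(\alpha)=\hat f(\beta)$. They are periodic if: $n\ge m$; $\alpha\ne\beta$; $\mathrm{left}_{m-1}(\alpha)=\mathrm{right}_{m-1}(\alpha)$; $\mathrm{left}_{m-1}(\beta)=\mathrm{right}_{m-1}(\beta)$; and $\hat f(\alpha)=\hat f(\beta)$. *)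

(* Defs.v *)
From mathcomp Require Import all_boot all_algebra.
Set Implicit Arguments. Unset Strict Implicit. Unset Printing Implicit Defensive.

Section CA.
Variables (p m : nat).
Implicit Types (f : m.-tuple 'I_p -> 'I_p) (w : seq 'I_p).

Definition window (x0 : 'I_p) w (j : nat) : m.-tuple 'I_p :=
  [tuple nth x0 w (j + i) | i < m].

Definition succw f w : seq 'I_p :=
  match w with
  | [::] => [::]
  | x0 :: _ => [seq f (window x0 w j) | j <- iota 0 (size w - m).+1]
  end.

Definition leftk (k : nat) w := take k w.
Definition rightk (k : nat) w := drop (size w - k) w.

Definition replaceable f (a b : seq 'I_p) : Prop :=
  size a = size b /\ 2 * m - 1 <= size a /\ a <> b /\
  leftk m.-1 a = leftk m.-1 b /\
  rightk m.-1 a = rightk m.-1 b /\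
  succw f a = succw f b.

Definition periodic f (a b : seq 'I_p) : Prop :=
  size a = size b /\ m <= size a /\ a <> b /\
  leftk m.-1 a = rightk m.-1 a /\
  leftk m.-1 b = rightk m.-1 b /\
  succw f a = succw f b.

(* global map with neighbourhood offsets L, R (L + 1 + R = m):
   tau(c)(i) = f(c(i-L), ..., c(i+R)) *)
Definition global_map (L : nat) f (c : int -> 'I_p) : int -> 'I_p :=
  fun i => f [tuple c (i - L%:Z + i0%:Z)%R | i0 < m].

End CA.

(* Main.v *)
Require Import Defs.
From mathcomp Require Import all_boot all_algebra zify.
From Stdlib Require Import Classical FunctionalExtensionality.
Set Implicit Arguments. Unset Strict Implicit. Unset Printing Implicit Defensive.
Import GRing.Theory.

Definition seg (p : nat) (c : int -> 'I_p) (a : int) (n : nat) : seq 'I_p :=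
  mkseq (fun i => c (a + i%:Z)%R) n.

Lemma size_seg p c a n : size (@seg p c a n) = n.
Proof. by rewrite size_mkseq. Qed.

Lemma left_seg p c a n k : k <= n -> take k (@seg p c a n) = seg c a k.
Proof.
move=> kn; rewrite /seg /mkseq -map_take take_iota.
by rewrite (minn_idPl kn).
Qed.

Lemma right_seg p c a n k : k <= n ->
  drop (n - k) (@seg p c a n) = seg c (a + (n - k)%:Z)%R k.
Proof.
move=> kn; rewrite /seg /mkseq -map_drop drop_iota.
have -> : n - (n - k) = k by lia.
rewrite add0n -[n - k]addn0 iotaDl -map_comp; apply: eq_map => i /=.
by congr c; lia.
Qed.

Lemma succw_cons p m (f : m.-tuple 'I_p -> 'I_p) x w :
  succw f (x :: w) = [seq f (window m x (x :: w) j) | j <- iota 0 (size (x :: w) - m).+1].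
Proof. by []. Qed.

Lemma succw_seg p m L (f : m.-tuple 'I_p -> 'I_p) c a n : 0 < m -> m <= n ->
  succw f (@seg p c a n) =
  mkseq (fun j => global_map L f c (a + L%:Z + j%:Z)%R) (n - m).+1.
Proof.
move=> m0 mn; case: n mn => [|n] mn.
  exfalso; lia.
set w := seg c a n.+1.
have Hw : w = c (a + 0%:Z)%R :: behead w by [].
rewrite Hw succw_cons -Hw size_seg /mkseq.
apply/eq_in_map => j; rewrite mem_iota => /andP [_ hj].
rewrite /global_map; congr f.
apply: eq_from_tnth => i; rewrite !tnth_mktuple.
rewrite /w /seg nth_mkseq; last first.
  have := ltn_ord i; lia.
congr c; lia.
Qed.

Lemma pigeon (T : finType) (g : nat -> T) : exists i j, i < j /\ g i = g j.
Proof.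
pose h : 'I_(#|T|.+1) -> T := fun i => g i.
have : ~~ injectiveb h.
  apply/negP => /injectiveP hi; have := leq_card _ hi; rewrite card_ord; lia.
case/injectivePn => x [y xy hxy].
case: (ltngtP x y) => [lt|lt|eq].
- by exists x, y.
- by exists y, x.
- by move: xy; rewrite (val_inj eq) eqxx.
Qed.

Definition st p k (c d : int -> 'I_p) (a : int) : {ffun 'I_k -> 'I_p * 'I_p} :=
  [ffun i : 'I_k => (c (a + (i : nat)%:Z)%R, d (a + (i : nat)%:Z)%R)].

Lemma st_seg p k c d a b : @st p k c d a = @st p k c d b ->
  seg c a k = seg c b k /\ seg d a k = seg d b k.
Proof.
move=> E; split; apply/eq_in_map => i; rewrite mem_iota add0n => /andP [_ hi];
have := congr1 (fun F : {ffun 'I_k -> 'I_p * 'I_p} => F (Ordinal hi)) E; rewrite !ffunE; case=> //.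
Qed.

Lemma per_lem p m L (f : m.-tuple 'I_p -> 'I_p) k c d a t :
  m = k.+1 -> global_map L f c = global_map L f d -> 0 < t ->
  seg c a k = seg c (a + t%:Z)%R k -> seg d a k = seg d (a + t%:Z)%R k ->
  seg c a k <> seg d a k ->
  periodic f (seg c a (t + k)) (seg d a (t + k)).
Proof.
move=> hm Hcd t0 Ec Ed ne.
have hk : m.-1 = k by rewrite hm.
rewrite /periodic /leftk /rightk !size_seg hk.
split; first done. split; first lia. split.
  by move=> E; apply: ne; rewrite -(@left_seg _ c a (t + k)) ?leq_addl // E left_seg ?leq_addl.
rewrite !left_seg ?leq_addl // !right_seg ?leq_addl // addnK -Ec -Ed.
split; first done. split; first done.
by rewrite !(succw_seg L) ?Hcd //; lia.
Qed.

Lemma rep_lem p m L (f : m.-tuple 'I_p -> 'I_p) k c d a n j :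
  m = k.+1 -> global_map L f c = global_map L f d -> 2 * k + 1 <= n ->
  seg c a k = seg d a k -> seg c (a + (n - k)%:Z)%R k = seg d (a + (n - k)%:Z)%R k ->
  j < n -> c (a + j%:Z)%R <> d (a + j%:Z)%R ->
  replaceable f (seg c a n) (seg d a n).
Proof.
move=> hm Hcd hn El Er hj ne.
have hk : m.-1 = k by rewrite hm.
have kn : k <= n by lia.
rewrite /replaceable /leftk /rightk !size_seg hk.
split; first done. split; first lia. split.
  move=> E; apply: ne; have := congr1 (fun s => nth (c a) s j) E.
  by rewrite /seg !nth_mkseq.
rewrite !left_seg // !right_seg //.
split; first done. split; first done.
by rewrite !(succw_seg L) ?Hcd //; lia.
Qed.

Theorem lemma4 (p m L R : nat) (f : m.-tuple 'I_p -> 'I_p) :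
  2 <= p -> 2 <= m -> L + 1 + R = m ->
  (~ exists a b : seq 'I_p, replaceable f a b) ->
  (~ exists a b : seq 'I_p, periodic f a b) ->
  injective (global_map L f).
Proof.
move=> hp hm hLR nrep nper c d Hcd.
apply: functional_extensionality => i0; apply: NNPP => ne.
set k := m.-1; have hmk : m = k.+1 by rewrite /k; lia.
have per : forall a t, 0 < t -> @st p k c d a = @st p k c d (a + t%:Z)%R ->
    seg c a k <> seg d a k -> False.
  move=> a t t0 E ne'; case: (st_seg E) => Ec Ed.
  by apply: nper; exists (seg c a (t + k)), (seg d a (t + k)); exact: (per_lem hmk Hcd t0 Ec Ed ne').
case: (classic (exists s, seg c (i0 - k%:Z - s%:Z)%R k = seg d (i0 - k%:Z - s%:Z)%R k))
  => [[s Hs]|HnL].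
  case: (classic (exists t, seg c (i0 + 1 + t%:Z)%R k = seg d (i0 + 1 + t%:Z)%R k))
    => [[t Ht]|HnR].
    apply: nrep; exists (seg c (i0 - k%:Z - s%:Z)%R (k + s + 1 + t + k)),
                        (seg d (i0 - k%:Z - s%:Z)%R (k + s + 1 + t + k)).
    apply: (rep_lem (j := k + s) hmk Hcd) => //; first lia.
      have -> : (i0 - k%:Z - s%:Z + (k + s + 1 + t + k - k)%:Z = i0 + 1 + t%:Z)%R by lia.
      exact: Ht.
      lia.
    have -> : (i0 - k%:Z - s%:Z + (k + s)%:Z = i0)%R by lia.
    exact: ne.
  have [t1 [t2 [lt E]]] := pigeon (fun t => @st p k c d (i0 + 1 + t%:Z)%R).
  apply: (per (i0 + 1 + t1%:Z)%R (t2 - t1)); first lia.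
    by rewrite /= in E; rewrite E; congr st; lia.
  by move=> H; apply: HnR; exists t1.
have [s1 [s2 [lt E]]] := pigeon (fun s => @st p k c d (i0 - k%:Z - s%:Z)%R).
apply: (per (i0 - k%:Z - s2%:Z)%R (s2 - s1)); first lia.
  by rewrite /= in E; rewrite -E; congr st; lia.
by move=> H; apply: HnL; exists s2.
Qed.
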